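(* Let $K=\{p\in\mathbb{R}^3:0\le p_3\le\theta(p_1,p_2)\}$ and, for $p^{pr}\in K$, let $N_K(p^{pr})=\{z\in\mathbb{R}^3:\langle z,q-p^{pr}\rangle\le0\ \forall q\in K\}$ be the normal cone. Then: (i) if $p^{pr}\in\{(p_1,p_2,p_3):0<p_3<\theta(p_1,p_2)\}$, then $N_K(p^{pr})=\{0\}$; (ii) if $p^{pr}\in(0,\infty)\times(0,\infty)\times\{0\}$, then $N_K(p^{pr})=\{0\}\times\{0\}\times(-\infty,0]$; (iii) if $p^{pr}=(p^{pr}_1,0,0)$ with $p^{pr}_1>0$, then $N_K(p^{pr})=\{0\}\times(-\infty,0]\times(-\infty,0]\ \cup\ \{(0,q_2,q_3)\in\{0\}\times(-\infty,0]\times(0,\infty):(0,-q_2/q_3)\in\partial^+\theta(p^{pr}_1,0)\}$; moreover $(0,q)\in\partial^+\theta(p^{pr}_1,0)$ is equivalent to $q\ge\lim_{z\searrow0}\partial_2\theta(p^{pr}_1,z)$, and $\partial^+\theta(p^{pr}_1,0)$ is empty if this limit equals $+\infty$; the analogous representation holds for $p^{pr}=(0,p^{pr}_2,0)$ with $p^{pr}_2>0$; (iv) if $p^{pr}=(0,0,0)$, then $N_K(p^{pr})=(-\infty,0]^3\cup\{(q_1,q_2,q_3)\in(-\infty,0]\times(-\infty,0]\times(0,\infty):(q_1/q_3,q_2/q_3)\in-\partial^+\theta(0)\}$; (v) if $p^{pr}=(p^{pr}_1,p^{pr}_2,\theta(p^{pr}_1,p^{pr}_2))$ with $(p^{pr}_1,p^{pr}_2)\in(0,\infty)^2$,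 then $N_K(p^{pr})=\{\lambda(-\partial_1\theta(p^{pr}_1,p^{pr}_2),-\partial_2\theta(p^{pr}_1,p^{pr}_2),1):\lambda>0\}$.
   Context: $\theta:[0,\infty)^2\to[0,\infty)$ is continuous, concave, 1-homogeneous, symmetric, $C^\infty$ on $(0,\infty)^2$, with $\theta(0,s)=\theta(s,0)=0$, $\theta(s,s)=s$, $\theta(s,t)>0$ for $s,t>0$, and nondecreasing in each argument; it is regarded as a concave function $\mathbb{R}^2\to\mathbb{R}\cup\{-\infty\}$ by setting $\theta(s,t)=-\infty$ if $\min\{s,t\}<0$. The super-differential of $\theta$ at $x\in\mathbb{R}^2$ is $\partial^+\theta(x)=-\partial(-\theta)(x)$, where $\partial(-\theta)(x)$ is the convex subdifferential of $-\theta$ at $x$; equivalently $\partial^+\theta(x)=\{r\in\mathbb{R}^2:\theta(y)\le\theta(x)+\langle r,y-x\rangle\ \forall y\in\mathbb{R}^2\}$. *)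

(* Defs.v *)
From Stdlib Require Import Reals Lra List.
From Coquelicot Require Import Coquelicot.
Open Scope R_scope.

Definition quad (x : R * R) : Prop := 0 <= fst x /\ 0 <= snd x.

Definition part (b : bool) (f : R -> R -> R) : R -> R -> R :=
  fun s t => if b then Derive (fun u => f u t) s else Derive (fun u => f s u) t.

Fixpoint pder (ds : list bool) (f : R -> R -> R) : R -> R -> R :=
  match ds with
  | nil => f
  | b :: ds' => part b (pder ds' f)
  end.

(* C^oo on the open quadrant (0,oo)^2: all iterated partial derivatives
   exist and are (jointly) continuous there *)
Definition smooth_pos (f : R -> R -> R) : Prop :=
  forall ds : list bool, forall s t, 0 < s -> 0 < t ->
    continuous (fun x : R * R => pder ds f (fst x) (snd x)) (s, t) /\
    ex_derive (fun u => pder ds f u t) s /\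
    ex_derive (fun u => pder ds f s u) t.

Definition theta_hyp (th : R -> R -> R) : Prop :=
  (forall s t, 0 <= s -> 0 <= t ->
     filterlim (fun x : R * R => th (fst x) (snd x))
               (within quad (locally (s, t))) (locally (th s t))) /\
  (forall s t, 0 <= s -> 0 <= t -> 0 <= th s t) /\
  (forall s1 t1 s2 t2 l, 0 <= s1 -> 0 <= t1 -> 0 <= s2 -> 0 <= t2 ->
     0 <= l <= 1 ->
     l * th s1 t1 + (1 - l) * th s2 t2
       <= th (l * s1 + (1 - l) * s2) (l * t1 + (1 - l) * t2)) /\
  (forall l s t, 0 <= l -> 0 <= s -> 0 <= t -> th (l * s) (l * t) = l * th s t) /\
  (forall s t, 0 <= s -> 0 <= t -> th s t = th t s) /\
  smooth_pos th /\
  (forall s, 0 <= s -> th 0 s = 0 /\ th s 0 = 0) /\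
  (forall s, 0 <= s -> th s s = s) /\
  (forall s t, 0 < s -> 0 < t -> 0 < th s t) /\
  (forall s s' t, 0 <= s -> s <= s' -> 0 <= t -> th s t <= th s' t) /\
  (forall s t t', 0 <= s -> 0 <= t -> t <= t' -> th s t <= th s t').

Definition theta_ext (th : R -> R -> R) (y1 y2 : R) : Rbar :=
  if Rle_dec 0 y1 then (if Rle_dec 0 y2 then Finite (th y1 y2) else m_infty)
  else m_infty.

Definition superdiff (th : R -> R -> R) (x1 x2 r1 r2 : R) : Prop :=
  forall y1 y2 : R,
    Rbar_le (theta_ext th y1 y2)
            (Rbar_plus (theta_ext th x1 x2)
                       (Finite (r1 * (y1 - x1) + r2 * (y2 - x2)))).

(* K = { p in R^3 : 0 <= p3 <= theta(p1,p2) } (theta = -oo off the quadrant) *)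
Definition Kset (th : R -> R -> R) (p1 p2 p3 : R) : Prop :=
  0 <= p1 /\ 0 <= p2 /\ 0 <= p3 /\ p3 <= th p1 p2.

Definition normal_cone (th : R -> R -> R) (p1 p2 p3 z1 z2 z3 : R) : Prop :=
  forall q1 q2 q3, Kset th q1 q2 q3 ->
    z1 * (q1 - p1) + z2 * (q2 - p2) + z3 * (q3 - p3) <= 0.

Definition pd1 (th : R -> R -> R) (s t : R) : R := Derive (fun u => th u t) s.
Definition pd2 (th : R -> R -> R) (s t : R) : R := Derive (fun u => th s u) t.

(* Main.v *)
Require Import Defs.
From Stdlib Require Import Reals Lra List.
From Coquelicot Require Import Coquelicot.
Open Scope R_scope.

Definition concave0 (g : R -> R) := forall x y l, 0 <= x -> 0 <= y -> 0 <= l <= 1 ->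
  l * g x + (1 - l) * g y <= g (l * x + (1 - l) * y).
Lemma tangent1 (g : R -> R) (a b : R) : concave0 g -> 0 < a -> 0 <= b ->
  ex_derive g a -> g b <= g a + Derive g a * (b - a).
Proof.
  intros Hc Ha Hb Hd.
  destruct (Req_dec b a) as [->|Hba]. { lra. }
  destruct (Rle_or_lt (g b) (g a + Derive g a * (b - a))) as [H|H]; [exact H|exfalso].
  set (D := Derive g a) in *.
  set (E := g b - g a - D * (b - a)).
  assert (HE : 0 < E) by (unfold E; lra).
  assert (Hab : 0 < Rabs (b - a)) by (apply Rabs_pos_lt; lra).
  pose proof (Derive_correct g a Hd) as Hder.
  apply is_derive_Reals in Hder. fold D in Hder.
  destruct (Hder (E / Rabs (b - a))) as [delta Hdl].
  { apply Rdiv_lt_0_compat; lra. }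
  set (t := Rmin (1/2) (delta / (2 * Rabs (b - a)))).
  assert (Ht0 : 0 < t).
  { unfold t; apply Rmin_pos; [lra|]. apply Rdiv_lt_0_compat; [apply cond_pos|lra]. }
  assert (Ht1 : t <= 1/2) by apply Rmin_l.
  assert (Ht2 : t <= delta / (2 * Rabs (b - a))) by apply Rmin_r.
  set (h := t * (b - a)).
  assert (Hh0 : h <> 0). { unfold h; apply Rmult_integral_contrapositive; split; lra. }
  assert (Hhd : Rabs h < delta).
  { unfold h. rewrite Rabs_mult, (Rabs_pos_eq t) by lra.
    apply Rle_lt_trans with (delta / (2 * Rabs (b - a)) * Rabs (b - a)).
    - apply Rmult_le_compat_r; lra.
    - replace (delta / (2 * Rabs (b - a)) * Rabs (b - a)) with (delta / 2) by (field; lra).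
      pose proof (cond_pos delta); lra. }
  specialize (Hdl h Hh0 Hhd).
  set (Q := (g (a + h) - g a) / h) in Hdl.
  assert (HQ : g (a + h) - g a = Q * h) by (unfold Q; field; exact Hh0).
  assert (Hcc := Hc b a t Hb (Rlt_le _ _ Ha) ltac:(lra)).
  replace (t * b + (1 - t) * a) with (a + h) in Hcc by (unfold h; ring).
  assert (H1 : (Q - D) * h >= t * E) by (unfold E, h in *; nra).
  assert (H2 : E <= (Q - D) * (b - a)).
  { unfold h in H1. apply Rmult_le_reg_l with t; [lra|]. nra. }
  assert (H3 : (Q - D) * (b - a) <= Rabs (Q - D) * Rabs (b - a)).
  { rewrite <- Rabs_mult. apply Rle_abs. }
  assert (H4 : Rabs (Q - D) * Rabs (b - a) < E).
  { apply Rmult_lt_compat_r with (r := Rabs (b - a)) in Hdl; [|lra].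
    replace (E / Rabs (b - a) * Rabs (b - a)) with E in Hdl by (field; lra). exact Hdl. }
  lra.
Qed.
Lemma ballR (l e y : R) : ball l e y <-> Rabs (y - l) < e.
Proof. unfold ball; simpl; unfold AbsRing_ball, abs, minus, plus, opp; simpl. tauto. Qed.

Lemma oneD (g : R -> R) : g 0 = 0 -> concave0 g ->
  (forall x y, 0 <= x <= y -> g x <= g y) ->
  (forall z, 0 < z -> ex_derive g z) ->
  (forall E, 0 < E -> exists e, 0 < e /\ forall z, 0 <= z < e -> g z < E) ->
  exists L : Rbar, filterlim (fun z => Derive g z) (at_right 0) (Rbar_locally L) /\
    forall q, (forall z, 0 <= z -> g z <= q * z) <-> Rbar_le L (Finite q).
Proof.
  intros H0 Hc Hm Hd Hct.
  assert (Hmono : forall a b, 0 < a -> a <= b -> Derive g b <= Derive g a).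
  { intros a b Ha Hab.
    pose proof (tangent1 g a b Hc Ha ltac:(lra) (Hd a Ha)).
    pose proof (tangent1 g b a Hc ltac:(lra) ltac:(lra) (Hd b ltac:(lra))).
    destruct (Req_dec a b) as [->|]; [lra|]. nra. }
  assert (Hnn : forall z, 0 < z -> 0 <= Derive g z).
  { intros z Hz. pose proof (tangent1 g z (2*z) Hc Hz ltac:(lra) (Hd z Hz)).
    pose proof (Hm z (2*z) ltac:(lra)). nra. }
  assert (Hbd : forall z, 0 < z -> Derive g z * z <= g z).
  { intros z Hz. pose proof (tangent1 g z 0 Hc Hz ltac:(lra) (Hd z Hz)). lra. }
  set (E := fun x => exists z, 0 < z /\ x = Derive g z).
  pose proof (Lub_Rbar_correct E) as [Hub Hlub].
  set (L := Lub_Rbar E) in *.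
  assert (HL1 : Rbar_le (Finite (Derive g 1)) L).
  { apply Hub. exists 1. split; [lra|reflexivity]. }
  assert (Happ : forall M : R, Rbar_lt (Finite M) L -> exists z0, 0 < z0 /\ M < Derive g z0).
  { intros M HM. apply Classical_Prop.NNPP. intro Hn.
    assert (Hu : is_ub_Rbar E (Finite M)).
    { intros x [z [Hz ->]]. simpl. apply Rnot_lt_le. intro Hlt. apply Hn. exists z. split; assumption. }
    specialize (Hlub _ Hu). apply (Rbar_le_not_lt _ _ Hlub HM). }
  exists L. split.
  - destruct L as [l| |] eqn:HLe.
    + apply filterlim_locally. intros eps.
      destruct (Happ (l - eps)) as [z0 [Hz0 Hz0']]. { simpl. pose proof (cond_pos eps). lra. }
      exists (mkposreal z0 Hz0). intros x Hx Hxp. assert (Hx' : Rabs (x - 0) < z0) by (apply ballR; exact Hx). clear Hx. rename Hx' into Hx.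
      apply ballR.
      assert (Hxl : Derive g x <= l).
      { change (Rbar_le (Finite (Derive g x)) (Finite l)). apply Hub. exists x. split; [lra|reflexivity]. }
      rewrite Rminus_0_r, Rabs_pos_eq in Hx by lra.
      pose proof (Hmono x z0 Hxp ltac:(lra)).
      rewrite Rabs_left1 by lra. lra.
    + intros P [M HM]. 
      destruct (Happ M) as [z0 [Hz0 Hz0']]. { simpl. exact I. }
      exists (mkposreal z0 Hz0). intros x Hx Hxp. assert (Hx' : Rabs (x - 0) < z0) by (apply ballR; exact Hx). clear Hx. rename Hx' into Hx.
      rewrite Rminus_0_r, Rabs_pos_eq in Hx by lra.
      apply HM. pose proof (Hmono x z0 Hxp ltac:(lra)). lra.
    + simpl in HL1. contradiction.
  - intros q. split.
    + intros Hq. apply Hlub. intros x [z [Hz ->]]. simpl.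
      pose proof (Hbd z Hz). pose proof (Hq z ltac:(lra)).
      apply Rmult_le_reg_r with z; [lra|]. lra.
    + intros HLq z Hz.
      assert (Hdq : forall e, 0 < e -> Derive g e <= q).
      { intros e He. change (Rbar_le (Finite (Derive g e)) (Finite q)).
        apply Rbar_le_trans with L; [|exact HLq]. apply Hub. exists e. split; [lra|reflexivity]. }
      assert (Hq0 : 0 <= q). { pose proof (Hnn 1 ltac:(lra)). pose proof (Hdq 1 ltac:(lra)). lra. }
      destruct (Req_dec z 0) as [->|Hz0]. { rewrite H0. lra. }
      apply Rnot_lt_le. intro Hlt.
      destruct (Hct (g z - q * z) ltac:(lra)) as [e [He He']].
      set (ep := Rmin e z / 2).
      assert (Hep : 0 < ep /\ ep < e /\ ep < z).
      { unfold ep. pose proof (Rmin_l e z). pose proof (Rmin_r e z).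
        assert (0 < Rmin e z) by (apply Rmin_pos; lra). lra. }
      pose proof (He' ep ltac:(lra)).
      pose proof (tangent1 g ep z Hc ltac:(lra) Hz (Hd ep ltac:(lra))).
      pose proof (Hdq ep ltac:(lra)).
      nra.
Qed.

Section TH.
Variable th : R -> R -> R.
Hypothesis Hth : theta_hyp th.

Lemma superdiff_iff x1 x2 r1 r2 : 0 <= x1 -> 0 <= x2 ->
  (superdiff th x1 x2 r1 r2 <-> forall y1 y2, 0 <= y1 -> 0 <= y2 ->
     th y1 y2 <= th x1 x2 + (r1 * (y1 - x1) + r2 * (y2 - x2))).
Proof.
  intros H1 H2. unfold superdiff, theta_ext.
  destruct (Rle_dec 0 x1) as [_|]; [|lra]. destruct (Rle_dec 0 x2) as [_|]; [|lra].
  split.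
  - intros H y1 y2 Hy1 Hy2. specialize (H y1 y2).
    destruct (Rle_dec 0 y1); [|lra]. destruct (Rle_dec 0 y2); [|lra]. exact H.
  - intros H y1 y2.
    destruct (Rle_dec 0 y1); [|simpl; exact I]. destruct (Rle_dec 0 y2); [|simpl; exact I].
    simpl. apply H; assumption.
Qed.

Lemma conc_2 p1 : 0 <= p1 -> concave0 (fun u => th p1 u).
Proof.
  destruct Hth as (Hcont & Hnn & Hconc & _).
  intros Hp x y l Hx Hy Hl. pose proof (Hconc p1 x p1 y l Hp Hx Hp Hy Hl) as H.
  replace (l * p1 + (1 - l) * p1) with p1 in H by ring. exact H.
Qed.

Lemma conc_1 p2 : 0 <= p2 -> concave0 (fun u => th u p2).
Proof.
  destruct Hth as (Hcont & Hnn & Hconc & _).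
  intros Hp x y l Hx Hy Hl. pose proof (Hconc x p2 y p2 l Hx Hp Hy Hp Hl) as H.
  replace (l * p2 + (1 - l) * p2) with p2 in H by ring. exact H.
Qed.

Lemma exd1 s t : 0 < s -> 0 < t -> ex_derive (fun u => th u t) s.
Proof.
  destruct Hth as (_ & _ & _ & _ & _ & Hsm & _). intros. apply (Hsm nil s t); assumption.
Qed.

Lemma exd2 s t : 0 < s -> 0 < t -> ex_derive (fun u => th s u) t.
Proof.
  destruct Hth as (_ & _ & _ & _ & _ & Hsm & _). intros. apply (Hsm nil s t); assumption.
Qed.

Lemma cont_pd1 p1 p2 : 0 < p1 -> 0 < p2 -> forall E, 0 < E ->
  exists d, 0 < d /\ forall s, Rabs (s - p2) < d -> Rabs (pd1 th p1 s - pd1 th p1 p2) < E.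
Proof.
  destruct Hth as (_ & _ & _ & _ & _ & Hsm & _). intros H1 H2 E HE.
  destruct (Hsm (true :: nil) p1 p2 H1 H2) as [Hc _].
  assert (Hc2 : continuous (fun s => pder (true :: nil) th ((fun _ : R => p1) s) ((fun s : R => s) s)) p2).
  { apply continuous_comp_2; [apply continuous_const|apply continuous_id|exact Hc]. }
  unfold continuous in Hc2. rewrite filterlim_locally in Hc2. destruct (Hc2 (mkposreal E HE)) as [d Hd].
  exists d. split; [apply cond_pos|]. intros s Hs.
  assert (Hb : ball p2 d s) by (apply ballR; exact Hs).
  specialize (Hd s Hb). apply ballR in Hd. exact Hd.
Qed.

Lemma tangent2 p1 p2 q1 q2 : 0 < p1 -> 0 < p2 -> 0 <= q1 -> 0 <= q2 ->
  th q1 q2 <= th p1 p2 + pd1 th p1 p2 * (q1 - p1) + pd2 th p1 p2 * (q2 - p2).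
Proof.
  intros H1 H2 Hq1 Hq2.
  destruct Hth as (Hcont & Hnn & Hconc & _).
  set (a := pd1 th p1 p2). set (b := pd2 th p1 p2).
  set (d1 := q1 - p1). set (d2 := q2 - p2).
  apply Rnot_lt_le. intro Hlt.
  set (E := th q1 q2 - (th p1 p2 + a * d1 + b * d2)).
  assert (HE : 0 < E) by (unfold E; lra).
  destruct (cont_pd1 p1 p2 H1 H2 (E / (Rabs d1 + 1))) as [d [Hd Hd']].
  { apply Rdiv_lt_0_compat; [lra|]. pose proof (Rabs_pos d1); lra. }
  set (t := Rmin (1/2) (d / (2 * (Rabs d2 + 1)))).
  assert (Hd21 : 0 < Rabs d2 + 1) by (pose proof (Rabs_pos d2); lra).
  assert (Ht0 : 0 < t).
  { unfold t; apply Rmin_pos; [lra|]. apply Rdiv_lt_0_compat; lra. }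
  assert (Ht1 : t <= 1/2) by apply Rmin_l.
  assert (Ht2 : t <= d / (2 * (Rabs d2 + 1))) by apply Rmin_r.
  assert (Htd : Rabs (t * d2) < d).
  { rewrite Rabs_mult, (Rabs_pos_eq t) by lra.
    apply Rle_lt_trans with (d / (2 * (Rabs d2 + 1)) * (Rabs d2 + 1)).
    - apply Rmult_le_compat; try lra. apply Rabs_pos.
    - replace (d / (2 * (Rabs d2 + 1)) * (Rabs d2 + 1)) with (d / 2) by (field; lra). lra. }
  set (s := p2 + t * d2).
  assert (Hs : 0 < s). { unfold s, d2. nra. }
  assert (Hs' : Rabs (s - p2) < d) by (unfold s; replace (p2 + t * d2 - p2) with (t * d2) by ring; exact Htd).
  specialize (Hd' s Hs'). fold a in Hd'. set (c := pd1 th p1 s) in Hd'.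
  assert (T1 := tangent1 (fun u => th u s) p1 (p1 + t * d1) (conc_1 s ltac:(lra)) H1
                  ltac:(unfold d1; nra) (exd1 p1 s H1 Hs)).
  change (Derive (fun u => th u s) p1) with c in T1. simpl in T1.
  assert (T2 := tangent1 (fun u => th p1 u) p2 s (conc_2 p1 ltac:(lra)) H2
                  ltac:(lra) (exd2 p1 p2 H1 H2)).
  change (Derive (fun u => th p1 u) p2) with b in T2. simpl in T2.
  assert (C := Hconc q1 q2 p1 p2 t Hq1 Hq2 ltac:(lra) ltac:(lra) ltac:(lra)).
  replace (t * q1 + (1 - t) * p1) with (p1 + t * d1) in C by (unfold d1; ring).
  replace (t * q2 + (1 - t) * p2) with s in C by (unfold s, d2; ring).
  replace (p1 + t * d1 - p1) with (t * d1) in T1 by ring.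
  replace (s - p2) with (t * d2) in T2 by (unfold s; ring).
  assert (K : t * E <= t * ((c - a) * d1)) by (unfold E; nra).
  assert (K2 : E <= (c - a) * d1) by (apply Rmult_le_reg_l with t; lra).
  assert (K3 : (c - a) * d1 <= Rabs (c - a) * Rabs d1) by (rewrite <- Rabs_mult; apply Rle_abs).
  assert (K4 : Rabs (c - a) * Rabs d1 <= E / (Rabs d1 + 1) * Rabs d1).
  { apply Rmult_le_compat_r; [apply Rabs_pos|lra]. }
  assert (K5 : E / (Rabs d1 + 1) * Rabs d1 < E).
  { pose proof (Rabs_pos d1).
    replace (E / (Rabs d1 + 1) * Rabs d1) with (E - E / (Rabs d1 + 1)) by (field; lra).
    assert (0 < E / (Rabs d1 + 1)) by (apply Rdiv_lt_0_compat; lra). lra. }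
  lra.
Qed.

End TH.

Section TH2.
Variable th : R -> R -> R.
Hypothesis Hth : theta_hyp th.

Lemma red1 p1 q : 0 < p1 ->
  ((forall y1 y2, 0 <= y1 -> 0 <= y2 -> th y1 y2 <= q * y2) <->
   (forall z, 0 <= z -> th p1 z <= q * z)).
Proof.
  destruct Hth as (Hcont & Hnn & Hconc & Hhom & Hsym & Hsm & Hzero & Hdiag & _).
  intros Hp. split.
  - intros H z Hz. apply H; lra.
  - intros H y1 y2 Hy1 Hy2.
    assert (Hq : 1 <= q). { pose proof (H p1 ltac:(lra)). rewrite (Hdiag p1) in H0 by lra. nra. }
    destruct (Req_dec y1 0) as [->|Hy10].
    + rewrite (proj1 (Hzero y2 Hy2)). nra.
    + set (l := y1 / p1).
      assert (Hl : 0 < l) by (unfold l; apply Rdiv_lt_0_compat; lra).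
      assert (Hz : 0 <= p1 * y2 / y1) by (apply Rmult_le_pos; [nra|]; left; apply Rinv_0_lt_compat; lra).
      pose proof (Hhom l p1 (p1 * y2 / y1) ltac:(lra) ltac:(lra) Hz) as Hh.
      replace (l * p1) with y1 in Hh by (unfold l; field; lra).
      replace (l * (p1 * y2 / y1)) with y2 in Hh by (unfold l; field; lra).
      rewrite Hh. pose proof (H _ Hz).
      apply Rle_trans with (l * (q * (p1 * y2 / y1))).
      * apply Rmult_le_compat_l; lra.
      * right. unfold l. field. lra.
Qed.

Lemma red2 p2 q : 0 < p2 ->
  ((forall y1 y2, 0 <= y1 -> 0 <= y2 -> th y1 y2 <= q * y1) <->
   (forall z, 0 <= z -> th z p2 <= q * z)).
Proof.
  destruct Hth as (Hcont & Hnn & Hconc & Hhom & Hsym & Hsm & Hzero & Hdiag & _).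
  intros Hp. split.
  - intros H z Hz. apply H; lra.
  - intros H y1 y2 Hy1 Hy2.
    assert (Hq : 1 <= q). { pose proof (H p2 ltac:(lra)). rewrite (Hdiag p2) in H0 by lra. nra. }
    destruct (Req_dec y2 0) as [->|Hy20].
    + rewrite (proj2 (Hzero y1 Hy1)). nra.
    + set (l := y2 / p2).
      assert (Hl : 0 < l) by (unfold l; apply Rdiv_lt_0_compat; lra).
      assert (Hz : 0 <= p2 * y1 / y2) by (apply Rmult_le_pos; [nra|]; left; apply Rinv_0_lt_compat; lra).
      pose proof (Hhom l (p2 * y1 / y2) p2 ltac:(lra) Hz ltac:(lra)) as Hh.
      replace (l * p2) with y2 in Hh by (unfold l; field; lra).
      replace (l * (p2 * y1 / y2)) with y1 in Hh by (unfold l; field; lra).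
      rewrite Hh. pose proof (H _ Hz).
      apply Rle_trans with (l * (q * (p2 * y1 / y2))).
      * apply Rmult_le_compat_l; lra.
      * right. unfold l. field. lra.
Qed.

Lemma rc1 p1 : 0 <= p1 -> forall E, 0 < E -> exists e, 0 < e /\ forall z, 0 <= z < e -> th p1 z < E.
Proof.
  destruct Hth as (Hcont & Hnn & Hconc & Hhom & Hsym & Hsm & Hzero & _).
  intros Hp E HE. pose proof (Hcont p1 0 Hp ltac:(lra)) as Hc.
  rewrite filterlim_locally in Hc. destruct (Hc (mkposreal E HE)) as [e He].
  exists e. split; [apply cond_pos|]. intros z Hz.
  assert (Hb : ball (p1, 0) e (p1, z)).
  { split; [apply ball_center|]. apply ballR. simpl. rewrite Rminus_0_r, Rabs_pos_eq; lra. }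
  specialize (He _ Hb). simpl in He. specialize (He (conj Hp (proj1 Hz))).
  apply (proj1 (ballR _ _ _)) in He. simpl in He. rewrite (proj2 (Hzero p1 Hp)) in He.
  rewrite Rminus_0_r in He. pose proof (Rle_abs (th p1 z)). lra.
Qed.

Lemma rc2 p2 : 0 <= p2 -> forall E, 0 < E -> exists e, 0 < e /\ forall z, 0 <= z < e -> th z p2 < E.
Proof.
  destruct Hth as (Hcont & Hnn & Hconc & Hhom & Hsym & Hsm & Hzero & _).
  intros Hp E HE. pose proof (Hcont 0 p2 ltac:(lra) Hp) as Hc.
  rewrite filterlim_locally in Hc. destruct (Hc (mkposreal E HE)) as [e He].
  exists e. split; [apply cond_pos|]. intros z Hz.
  assert (Hb : ball (0, p2) e (z, p2)).
  { split; [|apply ball_center]. apply ballR. simpl. rewrite Rminus_0_r, Rabs_pos_eq; lra. }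
  specialize (He _ Hb). simpl in He. specialize (He (conj (proj1 Hz) Hp)).
  apply (proj1 (ballR _ _ _)) in He. simpl in He. rewrite (proj1 (Hzero p2 Hp)) in He.
  rewrite Rminus_0_r in He. pose proof (Rle_abs (th z p2)). lra.
Qed.

End TH2.

Section TH3.
Variable th : R -> R -> R.
Hypothesis Hth : theta_hyp th.

Lemma part3a p1 : 0 < p1 ->
  exists L : Rbar,
    filterlim (fun z => pd2 th p1 z) (at_right 0) (Rbar_locally L) /\
    (forall q, superdiff th p1 0 0 q <-> Rbar_le L (Finite q)) /\
    (L = p_infty -> forall r1 r2, ~ superdiff th p1 0 r1 r2).
Proof.
  intros Hp.
  pose proof Hth as (Hcont & Hnn & Hconc & Hhom & Hsym & Hsm & Hzero & Hdiag & Hpos & Hm1 & Hm2).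
  destruct (oneD (fun u => th p1 u)) as [L [HL Hiff]].
  - apply (proj2 (Hzero p1 ltac:(lra))).
  - apply conc_2; [exact Hth|lra].
  - intros x y Hxy. apply Hm2; lra.
  - intros z Hz. apply exd2; [exact Hth|lra|exact Hz].
  - apply rc1; [exact Hth|lra].
  - assert (Hsd : forall r1 q, superdiff th p1 0 r1 q <->
        (r1 = 0 /\ forall z, 0 <= z -> th p1 z <= q * z)).
    { intros r1 q. rewrite (superdiff_iff th) by lra.
      rewrite (proj2 (Hzero p1 ltac:(lra))).
      split.
      - intros H. 
        assert (r1 = 0).
        { pose proof (H (p1 + 1) 0 ltac:(lra) ltac:(lra)).
          pose proof (H 0 0 ltac:(lra) ltac:(lra)).
          rewrite (proj2 (Hzero (p1+1) ltac:(lra))) in H0.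
          rewrite (proj2 (Hzero 0 ltac:(lra))) in H1. nra. }
        subst r1. split; [reflexivity|].
        apply (red1 th Hth p1 q Hp). intros y1 y2 Hy1 Hy2.
        specialize (H y1 y2 Hy1 Hy2). lra.
      - intros [-> H] y1 y2 Hy1 Hy2.
        pose proof (proj2 (red1 th Hth p1 q Hp) H y1 y2 Hy1 Hy2). lra. }
    exists L. split; [exact HL|]. split.
    + intros q. rewrite Hsd. rewrite <- Hiff. split; [intros [_ H]; exact H|intros H; split; [reflexivity|exact H]].
    + intros HLi r1 r2 Hs. apply Hsd in Hs. destruct Hs as [_ Hs]. apply Hiff in Hs.
      rewrite HLi in Hs. simpl in Hs. exact Hs.
Qed.

Lemma part3b p2 : 0 < p2 ->
  exists L : Rbar,
    filterlim (fun z => pd1 th z p2) (at_right 0) (Rbar_locally L) /\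
    (forall q, superdiff th 0 p2 q 0 <-> Rbar_le L (Finite q)) /\
    (L = p_infty -> forall r1 r2, ~ superdiff th 0 p2 r1 r2).
Proof.
  intros Hp.
  pose proof Hth as (Hcont & Hnn & Hconc & Hhom & Hsym & Hsm & Hzero & Hdiag & Hpos & Hm1 & Hm2).
  destruct (oneD (fun u => th u p2)) as [L [HL Hiff]].
  - apply (proj1 (Hzero p2 ltac:(lra))).
  - apply conc_1; [exact Hth|lra].
  - intros x y Hxy. apply Hm1; lra.
  - intros z Hz. apply exd1; [exact Hth|exact Hz|lra].
  - apply rc2; [exact Hth|lra].
  - assert (Hsd : forall q r2, superdiff th 0 p2 q r2 <->
        (r2 = 0 /\ forall z, 0 <= z -> th z p2 <= q * z)).
    { intros q r2. rewrite (superdiff_iff th) by lra.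
      rewrite (proj1 (Hzero p2 ltac:(lra))).
      split.
      - intros H. 
        assert (r2 = 0).
        { pose proof (H 0 (p2 + 1) ltac:(lra) ltac:(lra)).
          pose proof (H 0 0 ltac:(lra) ltac:(lra)).
          rewrite (proj1 (Hzero (p2+1) ltac:(lra))) in H0.
          rewrite (proj1 (Hzero 0 ltac:(lra))) in H1. nra. }
        subst r2. split; [reflexivity|].
        apply (red2 th Hth p2 q Hp). intros y1 y2 Hy1 Hy2.
        specialize (H y1 y2 Hy1 Hy2). lra.
      - intros [-> H] y1 y2 Hy1 Hy2.
        pose proof (proj2 (red2 th Hth p2 q Hp) H y1 y2 Hy1 Hy2). lra. }
    exists L. split; [exact HL|]. split.
    + intros q. rewrite Hsd. rewrite <- Hiff. split; [intros [_ H]; exact H|intros H; split; [reflexivity|exact H]].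
    + intros HLi r1 r2 Hs. apply Hsd in Hs. destruct Hs as [_ Hs]. apply Hiff in Hs.
      rewrite HLi in Hs. simpl in Hs. exact Hs.
Qed.

End TH3.

Lemma max_deriv (f : R -> R) c r : ex_derive f c -> 0 < r ->
  (forall x, c - r < x -> x < c + r -> f x <= f c) -> Derive f c = 0.
Proof.
  intros Hd Hr Hm. pose proof (ex_derive_Reals_0 f c Hd) as pr.
  rewrite <- (Derive_Reals f c pr). apply (deriv_maximum f (c - r) (c + r) c pr); lra || auto.
Qed.

Lemma divle c d b x : 0 < c -> (x <= (- d / c) * b <-> c * x + d * b <= 0).
Proof.
  intros Hc. split; intros H.
  - apply Rmult_le_compat_l with (r := c) in H; [|lra].
    replace (c * (- d / c * b)) with (- (d * b)) in H by (field; lra). lra.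
  - apply Rmult_le_reg_l with c; [lra|].
    replace (c * (- d / c * b)) with (- (d * b)) by (field; lra). lra.
Qed.

Lemma divle2 c d1 d2 y1 y2 x : 0 < c ->
  (x <= 0 + (- (d1 / c) * (y1 - 0) + - (d2 / c) * (y2 - 0)) <-> c * x + d1 * y1 + d2 * y2 <= 0).
Proof.
  intros Hc. split; intros H.
  - apply Rmult_le_compat_l with (r := c) in H; [|lra].
    replace (c * (0 + (- (d1 / c) * (y1 - 0) + - (d2 / c) * (y2 - 0)))) with (- (d1 * y1 + d2 * y2)) in H by (field; lra). lra.
  - apply Rmult_le_reg_l with c; [lra|].
    replace (c * (0 + (- (d1 / c) * (y1 - 0) + - (d2 / c) * (y2 - 0)))) with (- (d1 * y1 + d2 * y2)) by (field; lra). lra.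
Qed.
Theorem lemma4p4 (th : R -> R -> R) (Hth : theta_hyp th) :
  (* (i) *)
  (forall p1 p2 p3, 0 <= p1 -> 0 <= p2 -> 0 < p3 -> p3 < th p1 p2 ->
     forall z1 z2 z3, normal_cone th p1 p2 p3 z1 z2 z3 <->
       (z1 = 0 /\ z2 = 0 /\ z3 = 0)) /\
  (* (ii) *)
  (forall p1 p2, 0 < p1 -> 0 < p2 ->
     forall z1 z2 z3, normal_cone th p1 p2 0 z1 z2 z3 <->
       (z1 = 0 /\ z2 = 0 /\ z3 <= 0)) /\
  (* (iii), point (p1,0,0) *)
  (forall p1, 0 < p1 ->
     (forall z1 z2 z3, normal_cone th p1 0 0 z1 z2 z3 <->
        ((z1 = 0 /\ z2 <= 0 /\ z3 <= 0) \/
         (z1 = 0 /\ z2 <= 0 /\ 0 < z3 /\ superdiff th p1 0 0 (- z2 / z3)))) /\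
     exists L : Rbar,
       filterlim (fun z => pd2 th p1 z) (at_right 0) (Rbar_locally L) /\
       (forall q, superdiff th p1 0 0 q <-> Rbar_le L (Finite q)) /\
       (L = p_infty -> forall r1 r2, ~ superdiff th p1 0 r1 r2)) /\
  (* (iii), analogous point (0,p2,0) *)
  (forall p2, 0 < p2 ->
     (forall z1 z2 z3, normal_cone th 0 p2 0 z1 z2 z3 <->
        ((z2 = 0 /\ z1 <= 0 /\ z3 <= 0) \/
         (z2 = 0 /\ z1 <= 0 /\ 0 < z3 /\ superdiff th 0 p2 (- z1 / z3) 0))) /\
     exists L : Rbar,
       filterlim (fun z => pd1 th z p2) (at_right 0) (Rbar_locally L) /\
       (forall q, superdiff th 0 p2 q 0 <-> Rbar_le L (Finite q)) /\
       (L = p_infty -> forall r1 r2, ~ superdiff th 0 p2 r1 r2)) /\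
  (* (iv) *)
  (forall z1 z2 z3, normal_cone th 0 0 0 z1 z2 z3 <->
     ((z1 <= 0 /\ z2 <= 0 /\ z3 <= 0) \/
      (z1 <= 0 /\ z2 <= 0 /\ 0 < z3 /\
       superdiff th 0 0 (- (z1 / z3)) (- (z2 / z3))))) /\
  (* (v) *)
  (forall p1 p2, 0 < p1 -> 0 < p2 ->
     forall z1 z2 z3, normal_cone th p1 p2 (th p1 p2) z1 z2 z3 <->
       exists l, 0 <= l /\
         z1 = l * (- pd1 th p1 p2) /\ z2 = l * (- pd2 th p1 p2) /\ z3 = l).
Proof.
  pose proof Hth as (Hcont & Hnn & Hconc & Hhom & Hsym & Hsm & Hzero & Hdiag & Hpos & Hm1 & Hm2).
  assert (HK : forall q1 q2 q3, 0 <= q1 -> 0 <= q2 -> 0 <= q3 -> q3 <= th q1 q2 -> Kset th q1 q2 q3).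
  { intros. unfold Kset. tauto. }
  assert (HK0 : forall q1 q2, 0 <= q1 -> 0 <= q2 -> Kset th q1 q2 0).
  { intros. apply HK; try lra. apply Hnn; lra. }
  assert (HKt : forall q1 q2, 0 <= q1 -> 0 <= q2 -> Kset th q1 q2 (th q1 q2)).
  { intros. apply HK; try lra. apply Hnn; lra. }
  split; [|split; [|split; [|split; [|split]]]].
  -
    intros p1 p2 p3 H1 H2 H3 H4.
    assert (P1 : 0 < p1).
    { destruct (Req_dec p1 0) as [->|]; [|lra]. rewrite (proj1 (Hzero p2 H2)) in H4. lra. }
    assert (P2 : 0 < p2).
    { destruct (Req_dec p2 0) as [->|]; [|lra]. rewrite (proj2 (Hzero p1 H1)) in H4. lra. }
    set (T := th p1 p2) in *.
    set (lam := p3 / T).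
    assert (Hlam : 0 < lam < 1).
    { unfold lam. split; [apply Rdiv_lt_0_compat; lra|].
      apply Rmult_lt_reg_r with T; [lra|]. unfold Rdiv. rewrite Rmult_assoc, Rinv_l by lra. lra. }
    assert (HlT : lam * T = p3) by (unfold lam; field; lra).
    intros z1 z2 z3. split.
    + intros Hn.
      assert (A1 := Hn p1 p2 T (HK p1 p2 T H1 H2 ltac:(lra) (Rle_refl _))).
      assert (A2 := Hn p1 p2 0 (HK0 p1 p2 H1 H2)).
      assert (A3 := Hn (p1 + 1) p2 p3 (HK (p1 + 1) p2 p3 ltac:(lra) H2 ltac:(lra)
                      ltac:(pose proof (Hm1 p1 (p1+1) p2 H1 ltac:(lra) H2) as HH; fold T in HH; lra))).
      assert (A4 := Hn p1 (p2 + 1) p3 (HK p1 (p2 + 1) p3 H1 ltac:(lra) ltac:(lra)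
                      ltac:(pose proof (Hm2 p1 p2 (p2+1) H1 H2 ltac:(lra)) as HH; fold T in HH; lra))).
      assert (C1 := Hconc p1 p2 0 p2 lam H1 H2 ltac:(lra) H2 ltac:(lra)).
      rewrite (proj1 (Hzero p2 H2)) in C1.
      replace (lam * p1 + (1 - lam) * 0) with (lam * p1) in C1 by ring.
      replace (lam * p2 + (1 - lam) * p2) with p2 in C1 by ring.
      assert (C2 := Hconc p1 p2 p1 0 lam H1 H2 H1 ltac:(lra) ltac:(lra)).
      rewrite (proj2 (Hzero p1 H1)) in C2.
      replace (lam * p2 + (1 - lam) * 0) with (lam * p2) in C2 by ring.
      replace (lam * p1 + (1 - lam) * p1) with p1 in C2 by ring.
      fold T in C1, C2.
      assert (A5 := Hn (lam * p1) p2 p3 (HK (lam * p1) p2 p3 ltac:(nra) H2 ltac:(lra) ltac:(nra))).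
      assert (A6 := Hn p1 (lam * p2) p3 (HK p1 (lam * p2) p3 H1 ltac:(nra) ltac:(lra) ltac:(nra))).
      assert (z3 <= 0).
      { apply Rnot_lt_le; intro. assert (0 < z3 * (T - p3)) by (apply Rmult_lt_0_compat; lra). lra. }
      assert (0 <= z3).
      { apply Rnot_lt_le; intro. assert (0 < (- z3) * p3) by (apply Rmult_lt_0_compat; lra). lra. }
      assert (z3 = 0) by lra. subst z3.
      assert (z1 <= 0) by lra. assert (z2 <= 0) by lra.
      assert (0 <= z1).
      { apply Rnot_lt_le; intro. assert (0 < (- z1) * (p1 - lam * p1)) by (apply Rmult_lt_0_compat; nra). lra. }
      assert (0 <= z2).
      { apply Rnot_lt_le; intro. assert (0 < (- z2) * (p2 - lam * p2)) by (apply Rmult_lt_0_compat; nra). lra. }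
      split; [lra|split; lra].
    + intros (-> & -> & ->) q1 q2 q3 _. lra.
  -
    intros p1 p2 P1 P2 z1 z2 z3. split.
    + intros Hn.
      assert (A1 := Hn p1 p2 (th p1 p2) (HKt p1 p2 ltac:(lra) ltac:(lra))).
      pose proof (Hpos p1 p2 P1 P2).
      assert (A2 := Hn (p1 + 1) p2 0 (HK0 (p1 + 1) p2 ltac:(lra) ltac:(lra))).
      assert (A3 := Hn 0 p2 0 (HK0 0 p2 ltac:(lra) ltac:(lra))).
      assert (A4 := Hn p1 (p2 + 1) 0 (HK0 p1 (p2 + 1) ltac:(lra) ltac:(lra))).
      assert (A5 := Hn p1 0 0 (HK0 p1 0 ltac:(lra) ltac:(lra))).
      split; [nra|split; nra].
    + intros (-> & -> & H) q1 q2 q3 (_ & _ & Hq3 & _). nra.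
  -
    intros p1 P1. split; [|exact (part3a th Hth p1 P1)].
    intros z1 z2 z3.
    rewrite (superdiff_iff th) by lra. rewrite (proj2 (Hzero p1 ltac:(lra))).
    split.
    + intros Hn.
      assert (A1 := Hn (p1 + 1) 0 0 (HK0 (p1 + 1) 0 ltac:(lra) ltac:(lra))).
      assert (A2 := Hn 0 0 0 (HK0 0 0 ltac:(lra) ltac:(lra))).
      assert (A3 := Hn p1 1 0 (HK0 p1 1 ltac:(lra) ltac:(lra))).
      assert (Z1 : z1 = 0) by nra. subst z1.
      destruct (Rle_or_lt z3 0) as [H3|H3]; [left; split; [reflexivity|split; nra]|right].
      split; [reflexivity|split; [nra|split; [exact H3|]]].
      intros y1 y2 Hy1 Hy2.
      assert (A := Hn y1 y2 (th y1 y2) (HKt y1 y2 Hy1 Hy2)).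
      replace (0 + (0 * (y1 - p1) + - z2 / z3 * (y2 - 0))) with (- z2 / z3 * y2) by ring.
      apply divle; [exact H3|]. lra.
    + intros [(-> & H2 & H3) | (-> & H2 & H3 & Hs)] q1 q2 q3 (Hq1 & Hq2 & Hq3 & Hq4).
      * nra.
      * specialize (Hs q1 q2 Hq1 Hq2).
        replace (0 + (0 * (q1 - p1) + - z2 / z3 * (q2 - 0))) with (- z2 / z3 * q2) in Hs by ring.
        apply divle in Hs; [|exact H3]. nra.
  -
    intros p2 P2. split; [|exact (part3b th Hth p2 P2)].
    intros z1 z2 z3.
    rewrite (superdiff_iff th) by lra. rewrite (proj1 (Hzero p2 ltac:(lra))).
    split.
    + intros Hn.
      assert (A1 := Hn 0 (p2 + 1) 0 (HK0 0 (p2 + 1) ltac:(lra) ltac:(lra))).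
      assert (A2 := Hn 0 0 0 (HK0 0 0 ltac:(lra) ltac:(lra))).
      assert (A3 := Hn 1 p2 0 (HK0 1 p2 ltac:(lra) ltac:(lra))).
      assert (Z2 : z2 = 0) by nra. subst z2.
      destruct (Rle_or_lt z3 0) as [H3|H3]; [left; split; [reflexivity|split; nra]|right].
      split; [reflexivity|split; [nra|split; [exact H3|]]].
      intros y1 y2 Hy1 Hy2.
      assert (A := Hn y1 y2 (th y1 y2) (HKt y1 y2 Hy1 Hy2)).
      replace (0 + (- z1 / z3 * (y1 - 0) + 0 * (y2 - p2))) with (- z1 / z3 * y1) by ring.
      apply divle; [exact H3|]. lra.
    + intros [(-> & H2 & H3) | (-> & H2 & H3 & Hs)] q1 q2 q3 (Hq1 & Hq2 & Hq3 & Hq4).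
      * nra.
      * specialize (Hs q1 q2 Hq1 Hq2).
        replace (0 + (- z1 / z3 * (q1 - 0) + 0 * (q2 - p2))) with (- z1 / z3 * q1) in Hs by ring.
        apply divle in Hs; [|exact H3]. nra.
  -
    intros z1 z2 z3.
    rewrite (superdiff_iff th) by lra. rewrite (proj1 (Hzero 0 ltac:(lra))).
    split.
    + intros Hn.
      assert (A1 := Hn 1 0 0 (HK0 1 0 ltac:(lra) ltac:(lra))).
      assert (A2 := Hn 0 1 0 (HK0 0 1 ltac:(lra) ltac:(lra))).
      destruct (Rle_or_lt z3 0) as [H3|H3]; [left; split; [nra|split; nra]|right].
      split; [nra|split; [nra|split; [exact H3|]]].
      intros y1 y2 Hy1 Hy2.
      assert (A := Hn y1 y2 (th y1 y2) (HKt y1 y2 Hy1 Hy2)).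
      apply divle2; [exact H3|]. lra.
    + intros [(H1 & H2 & H3) | (H1 & H2 & H3 & Hs)] q1 q2 q3 (Hq1 & Hq2 & Hq3 & Hq4).
      * nra.
      * specialize (Hs q1 q2 Hq1 Hq2).
        apply divle2 in Hs; [|exact H3]. nra.
  -
    intros p1 p2 P1 P2 z1 z2 z3. split.
    + intros Hn.
      assert (A1 := Hn p1 p2 0 (HK0 p1 p2 ltac:(lra) ltac:(lra))).
      pose proof (Hpos p1 p2 P1 P2).
      assert (H3 : 0 <= z3) by nra.
      exists z3. split; [exact H3|].
      assert (D1 : Derive (fun u => z1 * (u - p1) + z3 * (th u p2 - th p1 p2)) p1 = 0).
      { apply max_deriv with p1; [|lra|].
        - auto_derive. apply exd1; [exact Hth|lra|lra].
        - intros x Hx1 Hx2.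
          assert (A := Hn x p2 (th x p2) (HKt x p2 ltac:(lra) ltac:(lra))). lra. }
      assert (D2 : Derive (fun u => z2 * (u - p2) + z3 * (th p1 u - th p1 p2)) p2 = 0).
      { apply max_deriv with p2; [|lra|].
        - auto_derive. apply exd2; [exact Hth|lra|lra].
        - intros x Hx1 Hx2.
          assert (A := Hn p1 x (th p1 x) (HKt p1 x ltac:(lra) ltac:(lra))). lra. }
      assert (E1 : is_derive (fun u => z1 * (u - p1) + z3 * (th u p2 - th p1 p2)) p1 (z1 + z3 * pd1 th p1 p2)).
      { unfold pd1. auto_derive; [apply exd1; [exact Hth|lra|lra]|ring]. }
      assert (E2 : is_derive (fun u => z2 * (u - p2) + z3 * (th p1 u - th p1 p2)) p2 (z2 + z3 * pd2 th p1 p2)).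
      { unfold pd2. auto_derive; [apply exd2; [exact Hth|lra|lra]|ring]. }
      assert (F1 : z1 + z3 * pd1 th p1 p2 = 0) by (rewrite <- (is_derive_unique _ _ _ E1); exact D1).
      assert (F2 : z2 + z3 * pd2 th p1 p2 = 0) by (rewrite <- (is_derive_unique _ _ _ E2); exact D2).
      split; [lra|split; lra].
    + intros (l & Hl & -> & -> & ->) q1 q2 q3 (Hq1 & Hq2 & Hq3 & Hq4).
      pose proof (tangent2 th Hth p1 p2 q1 q2 P1 P2 Hq1 Hq2).
      nra.
Qed.
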